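(* Let $\mathscr C$ be a class of finite groups and $G$ a nontrivial finite group. Then $G\in\mathscr C^{**}$ if and only if $G/\mathrm{Rad}(G)$ is isomorphic to a nonempty direct product of finite simple groups belonging to $\mathscr C$.
   Context: A class of finite groups is a nonempty collection of finite groups closed under isomorphism. The dual class $\mathscr C^*$ is the class of finite groups $G$ such that every normal subgroup $H$ of $G$ with $G/H\in\mathscr C$ satisfies $H=G$; $\mathscr C^{**}=(\mathscr C^* )^*$. For a nontrivial finite group $G$, its Baer radical $\mathrm{Rad}(G)$ is the intersection of all maximal normal subgroups of $G$ (normal subgroups $H\ne G$ with $G/H$ simple). *)

(* Defs.v *)
From HB Require Import structures.
From mathcomp Require Import all_boot all_fingroup all_solvable.
Set Implicit Arguments. Unset Strict Implicit. Unset Printing Implicit Defensive.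
Local Open Scope group_scope.

Definition group_class := forall gT : finGroupType, {group gT} -> Prop.

Definition iso_closed (C : group_class) : Prop :=
  forall (gT hT : finGroupType) (G : {group gT}) (H : {group hT}),
    G \isog H -> C gT G -> C hT H.

Definition class_nonempty (C : group_class) : Prop :=
  exists (gT : finGroupType) (G : {group gT}), C gT G.

Definition dual_class (C : group_class) : group_class :=
  fun gT G => forall H : {group gT}, H <| G -> C _ (G / H)%G -> H = G.

Definition baer_rad (gT : finGroupType) (G : {group gT}) : {group gT} :=
  (\bigcap_(H : {group gT} | [&& H <| G, H \proper G & simple (G / H)]) H)%G.

(* Main.v *)
Require Import Defs.
From HB Require Import structures.
From mathcomp Require Import all_boot all_fingroup all_solvable.
From Stdlib Require Import Classical.
Set Implicit Arguments. Unset Strict Implicit. Unset Printing Implicit Defensive.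
Local Open Scope group_scope.

Lemma dprod_norm (gT : finGroupType) (A B K : {group gT}) :
  A <| K -> B <| K -> A :&: B = 1 -> A * B = K -> A \x B = K.
Proof.
move=> nAK nBK tI eK; rewrite dprodE //.
apply/commG1P; apply/trivgP; rewrite -tI setIC.
apply: commg_subI; rewrite subsetI subxx /=.
  by rewrite (subset_trans (normal_sub nBK)) ?normal_norm.
by rewrite (subset_trans (normal_sub nAK)) ?normal_norm.
Qed.

Lemma isoQ (gT : finGroupType) (K H L : {group gT}) :
  L <| K -> H \subset K -> H * L = K -> H / (L :&: H) \isog K / L.
Proof.
move=> nLK sHK eK.
have nLH : H \subset 'N(L) by rewrite (subset_trans sHK) ?normal_norm.
by rewrite -eK quotientMidr; apply: second_isog.
Qed.

Lemma isoQ1 (gT : finGroupType) (K H L : {group gT}) :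
  L <| K -> H \subset K -> H * L = K -> L :&: H = 1 -> H \isog K / L.
Proof.
move=> nLK sHK eK tI; apply: isog_trans (isoQ nLK sHK eK).
by rewrite tI; apply: quotient1_isog.
Qed.

Lemma dec (gT : finGroupType) (K : {group gT}) (Q : {group gT} -> Prop) :
  (forall M, Q M -> M <| K /\ simple (K / M)) ->
  (forall A : {group gT}, A <| K -> A :!=: 1 -> exists2 M, Q M & ~~ (A \subset M)) ->
  exists n (A : 'I_n -> {group gT}), \big[dprod/1]_(i < n) A i = K /\
     forall i, simple (A i) /\ exists2 M, Q M & A i \isog K / M.
Proof.
move: Q; have [m] := ubnP #|K|; elim: m K => // m IH K ltK Q hQ1 hQ2.
have [K1 | ntK] := eqVneq K 1%G.
  exists 0, (fun _ => 1%G); split; first by rewrite big_ord0 K1.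
  by case.
have [A minA sAK] := minnormal_exists ntK (normG K).
have [ntA nAK] := andP (mingroupp minA).
have nsAK : A <| K by rewrite /normal sAK.
have [M0 QM0 nAM0] := hQ2 A nsAK ntA.
have [nsM0 sK] := hQ1 M0 QM0.
have maxM0 : maxnormal M0 K K by rewrite -quotient_simple.
have tI : A :&: M0 = 1.
  apply/eqP; apply: contraNT nAM0 => ntI.
  have nI : K \subset 'N(A :&: M0) by rewrite normsI ?normal_norm.
  have [_ minA'] := mingroupP minA.
  by rewrite -(minA' (A :&: M0)%G) ?subsetIr ?ntI ?subsetIl.
have eK : A * M0 = K.
  have sY : A <*> M0 \subset K by rewrite join_subG sAK normal_sub.
  have [_ maxM'] := maxgroupP maxM0.
  rewrite -norm_joinEl; last by rewrite (subset_trans sAK) ?normal_norm.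
  apply/eqP; rewrite eqEsubset sY /=; apply: contraR nAM0 => nsub.
  have pY : A <*> M0 \proper K by rewrite properEneq sY andbT; apply: contraNneq nsub => ->.
  rewrite -(maxM' (A <*> M0)%G) ?joing_subl ?joing_subr //.
  by rewrite pY normsY ?normal_norm.
have dK : A \x M0 = K by apply: dprod_norm.
have ltM0 : #|M0| < m.
  by rewrite -ltnS (leq_trans _ ltK) // ltnS proper_card ?(maxnormal_proper maxM0).
pose Q' (L' : {group gT}) := exists2 L : {group gT}, Q L & ~~ (M0 \subset L) /\ L' :=: L :&: M0.
have hQ1' : forall L', Q' L' -> L' <| M0 /\ simple (M0 / L').
  move=> L' [L QL [nML ->]].
  have [nsL sL] := hQ1 L QL.
  have maxL : maxnormal L K K by rewrite -quotient_simple.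
  have eML : M0 * L = K.
    apply: maxnormalM => // eq; rewrite eq subxx in nML; by [].
  split; first by rewrite setIC (normalGI (normal_sub nsM0) nsL).
  by rewrite (isog_simple (isoQ nsL (normal_sub nsM0) eML)).
have hQ2' : forall A' : {group gT}, A' <| M0 -> A' :!=: 1 -> exists2 M, Q' M & ~~ (A' \subset M).
  move=> A' nsA' ntA'.
  have sA'M0 : A' \subset M0 := normal_sub nsA'.
  have nsA'K : A' <| K.
    rewrite /normal (subset_trans sA'M0 (normal_sub nsM0)) -eK mulG_subG (normal_norm nsA') andbT.
    have [_ _ cAM _] := dprodP dK.
    rewrite centsC in cAM.
    exact: subset_trans cAM (subset_trans (centS sA'M0) (cent_sub _)).
  have [L QL nA'L] := hQ2 A' nsA'K ntA'.
  exists (L :&: M0)%G; last by rewrite subsetI negb_and nA'L.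
  exists L => //; split => //.
  by apply: contra nA'L => sM0L; apply: subset_trans sA'M0 sM0L.
have [n [B [dB hB]]] := IH M0 ltM0 Q' hQ1' hQ2'.
exists n.+1, (fun i : 'I_n.+1 => if unlift ord0 i is Some j then B j else A).
split.
  rewrite big_ord_recl unlift_none.
  rewrite -dK -dB; congr (_ \x _); apply: eq_bigr => i _.
  by rewrite (liftK ord0 i).
move=> i; case: unliftP => [j _|_].
  have [sBj [L' [L QL [nML eL']] iso']] := hB j.
  split=> //; exists L => //.
  apply: isog_trans iso' _; rewrite eL'.
  have [nsL sL] := hQ1 L QL.
  have maxL : maxnormal L K K by rewrite -quotient_simple.
  have eML : M0 * L = K.
    apply: maxnormalM => // eq; rewrite eq subxx in nML; by [].
  exact: isoQ nsL (normal_sub nsM0) eML.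
have isoA : A \isog K / M0 by apply: isoQ1 => //; rewrite setIC.
split; last by exists M0.
by rewrite (isog_simple isoA).
Qed.

Lemma bigdprod_norm (gT : finGroupType) n (A : 'I_n -> {group gT}) (K : {group gT}) :
  \big[dprod/1]_(i < n) A i = K -> forall i, A i <| K.
Proof.
elim: n A K => [|n IH] A K; first by move=> _ [].
rewrite big_ord_recl => dK.
have [nA0 nB] := dprod_normal2 dK.
case/dprodP: dK => [[H0 B0 eH0 eB0] eK cB tI].
move=> i; case: (unliftP ord0 i) => [j ->|->] //.
have nj : A (lift ord0 j) <| B0 by apply: (IH (fun k => A (lift ord0 k)) B0); rewrite -eB0.
have sjB : A (lift ord0 j) \subset B0 := normal_sub nj.
have sBK : (B0 : {set gT}) \subset K by rewrite -eB0 normal_sub.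
rewrite /normal (subset_trans sjB sBK) /= -eK eB0 mulG_subG.
rewrite (normal_norm nj) andbT.
rewrite eB0 centsC in cB.
exact: subset_trans cB (subset_trans (centS sjB) (cent_sub _)).
Qed.

Lemma rad_sub (gT : finGroupType) (G M : {group gT}) :
  M <| G -> simple (G / M) -> baer_rad G \subset M.
Proof.
move=> nM sM; rewrite /baer_rad /=; apply: bigcap_inf.
rewrite nM sM andbT /=.
rewrite properEneq normal_sub // andbT; apply/eqP => eMG.
move: sM; rewrite eMG quotientS1 //; case/simpleP; rewrite eqxx.
by [].
Qed.

Lemma rad_normal (gT : finGroupType) (G : {group gT}) :
  G :!=: 1 -> baer_rad G <| G /\ baer_rad G \proper G.
Proof.
move=> ntG; have [M maxM] := ex_maxnormal_ntrivg ntG.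
have nM := maxnormal_normal maxM.
have sM : simple (G / M) by rewrite quotient_simple.
have sRM := rad_sub nM sM.
have pR : baer_rad G \proper G := sub_proper_trans sRM (maxnormal_proper maxM).
split=> //; rewrite /normal proper_sub //=.
apply: norms_bigcap; apply/bigcapsP => H /and3P[nH _ _].
exact: normal_norm.
Qed.

Lemma simple_ne1 (gT : finGroupType) (G : {group gT}) : simple G -> G :!=: 1.
Proof. by case/simpleP. Qed.

Lemma CG (C : group_class) (C_iso : iso_closed C) (gT : finGroupType) (G : {group gT})
  (HC : dual_class (dual_class C) G) (M : {group gT}) :
  M <| G -> simple (G / M) -> C _ (G / M)%G.
Proof.
move=> nM sM; case: (classic (C _ (G / M)%G)) => // nC.
have ds : dual_class C (G / M)%G.
  move=> H nH CH.
  have [_ hs] := simpleP _ sM.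
  case: (hs H nH) => [H1|HG]; last by apply: val_inj.
  exfalso; apply: nC.
  apply: (C_iso _ _ _ _ _ CH); rewrite isog_sym.
  apply: isoQ1 => //; first by rewrite mulGSid ?normal_sub.
  by rewrite H1 setI1g.
have eMG := HC M nM ds.
case/negP: (simple_ne1 sM); rewrite eMG.
apply/eqP/val_inj => /=; congr finfun_of_set; exact: quotientS1.
Qed.

Lemma max_mul (gT : finGroupType) (K A M0 : {group gT}) :
  A <| K -> maxnormal M0 K K -> ~~ (A \subset M0) -> A * M0 = K.
Proof.
move=> nsAK maxM0 nAM0.
have sAK := normal_sub nsAK.
have nsM0 := maxnormal_normal maxM0.
have sY : A <*> M0 \subset K by rewrite join_subG sAK normal_sub.
have [_ maxM'] := maxgroupP maxM0.
rewrite -norm_joinEl; last by rewrite (subset_trans sAK) ?normal_norm.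
apply/eqP; rewrite eqEsubset sY /=; apply: contraR nAM0 => nsub.
have pY : A <*> M0 \proper K by rewrite properEneq sY andbT; apply: contraNneq nsub => ->.
rewrite -(maxM' (A <*> M0)%G) ?joing_subl ?joing_subr //.
by rewrite pY normsY ?normal_norm.
Qed.

Lemma CG2 (C : group_class) (C_iso : iso_closed C) (gT : finGroupType) (G : {group gT})
  (ntG : G :!=: 1) n (A : 'I_n -> {group coset_of (baer_rad G)})
  (dB : \big[dprod/1]_(i < n) A i = G / baer_rad G)
  (hA : forall i, simple (A i) /\ C _ (A i)) (M : {group gT}) :
  M <| G -> simple (G / M) -> C _ (G / M)%G.
Proof.
move=> nM sM.
set R := baer_rad G.
have [nR pR] := rad_normal ntG.
have sRM : R \subset M := rad_sub nM sM.
have nN : (M / R)%G <| G / R by apply: quotient_normal.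
have iso3 : (G / R) / (M / R) \isog G / M by apply: third_isog.
have sKN : simple ((G / R) / (M / R)) by rewrite (isog_simple iso3).
have maxN : maxnormal (M / R)%G (G / R)%G (G / R)%G by rewrite -quotient_simple.
have [i nAi] : exists i, ~~ (A i \subset M / R).
  apply: NNPP => hne.
  have sGM : G / R \subset M / R.
    rewrite -(bigdprodWY dB) gen_subG; apply/bigcupsP => i _.
    by apply: NNPP => ns; apply: hne; exists i; apply/negP.
  rewrite quotientSGK ?normal_norm // in sGM.
  case/negP: (simple_ne1 sM).
  have eMG : M = G by apply/val_inj/eqP; rewrite eqEsubset sGM normal_sub.
  rewrite eMG; apply/eqP/val_inj => /=; congr finfun_of_set; exact: quotientS1.
have nsAi := bigdprod_norm dB i.
have eK : A i * (M / R)%G = G / R by apply: max_mul.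
have tI : (M / R)%G :&: A i = 1.
  have [_ hs] := simpleP _ (proj1 (hA i)).
  have nI : A i :&: (M / R)%G <| A i := normalGI (normal_sub nsAi) nN.
  case: (hs _ nI) => /= h; first by rewrite setIC h.
  by case/negP: nAi; rewrite -h subsetIr.
have isoA : A i \isog (G / R) / (M / R) := isoQ1 nN (normal_sub nsAi) eK tI.
apply: (C_iso _ _ _ _ (isog_trans isoA iso3)).
exact: (proj2 (hA i)).
Qed.
Unset Implicit Arguments. Set Strict Implicit. Set Printing Implicit Defensive.

Theorem proposition3p7 (C : group_class) (C_iso : iso_closed C)
    (C_ne : class_nonempty C) (gT : finGroupType) (G : {group gT})
    (ntG : G :!=: 1) :
  @dual_class (dual_class C) gT G <->
  exists (n : nat) (A : 'I_n -> {group coset_of (baer_rad G)}),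
    [/\ 0 < n,
        \big[dprod/1]_(i < n) A i = G / baer_rad G &
        forall i, simple (A i) /\ C _ (A i)].
Proof.
have [nR pR] := rad_normal ntG.
set R := baer_rad G in nR pR *.
split.
- move=> HC.
  pose Q (N : {group coset_of R}) := N <| G / R /\ simple ((G / R) / N).
  have [] := @dec _ (G / R)%G Q (fun M h => h).
    move=> A nA ntA; apply: NNPP => hne.
    have [A0 eA sRA0 nA0] := inv_quotientN nR nA.
    have sA0R : A0 \subset R.
      rewrite /R /baer_rad /=; apply/bigcapsP => M /and3P[nM _ sM].
      have sRM : R \subset M := rad_sub nM sM.
      have nN : (M / R)%G <| G / R by apply: quotient_normal.
      have iso3 : (G / R) / (M / R) \isog G / M by apply: third_isog.
      have sKN : simple ((G / R) / (M / R)) by rewrite (isog_simple iso3).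
      have sAN : A \subset M / R.
        by apply: NNPP => ns; apply: hne; exists (M / R)%G => //; apply/negP.
      rewrite eA quotientSGK // in sAN.
      by rewrite (subset_trans (normal_sub nA0)) ?normal_norm.
    case/negP: ntA; rewrite eA; apply/eqP; exact: quotientS1.
  move=> n [A [dA hA]].
  exists n, A; split=> //.
  + case: n A dA hA => // A dA _; rewrite big_ord0 in dA.
    have : G / R \subset [1] by rewrite -dA.
    rewrite quotient_sub1 ?normal_norm // => sGR.
    by case/negP: (proper_subn pR).
  + move=> i; have [sAi [N [nN sN] iso]] := hA i; split=> //.
    have [M eN sRM nM] := inv_quotientN nR nN.
    have eN' : N = (M / R)%G by apply: val_inj.
    rewrite eN' in iso sN.
    have iso3 : (G / R) / (M / R) \isog G / M by apply: third_isog.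
    have sM : simple (G / M) by rewrite -(isog_simple iso3).
    apply: (C_iso _ _ _ _ _ (CG C_iso HC nM sM)).
    by rewrite isog_sym (isog_trans iso iso3).
- case=> n [A [n0 dA hA]] H nH CsH.
  apply: NNPP => nHG.
  have pH : H \proper G by rewrite properEneq normal_sub // andbT; apply/eqP => e; apply: nHG; apply: val_inj.
  have [M maxM sHM] := @maxgroup_exists _ (fun X : {group gT} => (X \proper G) && (G \subset 'N(X))) H
     (introT andP (conj pH (normal_norm nH))).
  have maxM' : maxnormal M G G := maxM.
  have nM := maxnormal_normal maxM'.
  have sM : simple (G / M) by rewrite quotient_simple.
  have CM := CG2 C_iso ntG dA hA nM sM.
  have iso3 : (G / H) / (M / H) \isog G / M by apply: third_isog.
  have e := CsH (M / H)%G (quotient_normal _ nM) (C_iso _ _ _ _ (isog_symr iso3) CM).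
  have nHM : H <| M := normalS sHM (normal_sub nM) nH.
  have eMG : M :=: G.
    apply: (quotient_inj nHM nH).
    by have := congr1 (fun X : {group _} => gval X) e.
  by have := maxnormal_proper maxM'; rewrite eMG properxx.
Qed.
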